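(* Let $\ell\ge 2$, let $\mathcal F\subset\binom{[n]}{\ell}$ be an intersecting family, and let $x\in\bigcup_{F\in\mathcal F}F$. Then $|\mathcal F(x)|\geq \gamma_{\ell-1}(\mathcal F)+1$, with equality only if $\mathcal F(x)$ consists of $\gamma_{\ell-1}(\mathcal F)+1$ pairwise disjoint $(\ell-1)$-sets.
   Context: A family is intersecting if any two members intersect. $\mathcal F(x)=\{F\setminus\{x\}: x\in F\in\mathcal F\}$. For $S\subset[n]$, $\mathcal F(\overline S)=\{F\in\mathcal F: F\cap S=\emptyset\}$, and $\gamma_{\ell-1}(\mathcal F)=\min_{S\in\binom{[n]}{\ell-1}}|\mathcal F(\overline S)|$. *)

(* Defs.v *)
From mathcomp Require Import all_boot.
Set Implicit Arguments. Unset Strict Implicit. Unset Printing Implicit Defensive.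

Definition intersecting n (F : {set {set 'I_n}}) : bool :=
  [forall A in F, forall B in F, A :&: B != set0].

Definition link n (F : {set {set 'I_n}}) (x : 'I_n) : {set {set 'I_n}} :=
  [set A :\ x | A in [set A in F | x \in A]].

Definition avoid n (F : {set {set 'I_n}}) (S : {set 'I_n}) : {set {set 'I_n}} :=
  [set A in F | [disjoint A & S]].

(* gamma_k(F) = min over k-subsets S of |F(bar S)|.  The default #|F| is an
   upper bound for every term, so this is the exact minimum whenever some
   k-subset of [n] exists (k <= n). *)
Definition gamma n (k : nat) (F : {set {set 'I_n}}) : nat :=
  \big[minn/#|F|]_(S : {set 'I_n} | #|S| == k) #|avoid F S|.

(* Main.v *)
Require Import Defs.
From mathcomp Require Import all_boot.
Set Implicit Arguments. Unset Strict Implicit.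

Lemma bigmin_seq_le (I : eqType) (r : seq I) (P : pred I) (f : I -> nat) d j :
  j \in r -> P j -> \big[minn/d]_(i <- r | P i) f i <= f j.
Proof.
elim: r => [|a r IH] //= Hj Pj; rewrite big_cons.
rewrite inE in Hj; case/orP: Hj => [/eqP <-|Hj].
  by rewrite Pj geq_minl.
case: (P a); last exact: IH.
by rewrite (leq_trans (geq_minr _ _)) // IH.
Qed.

Lemma gamma_le n k (F : {set {set 'I_n}}) (S : {set 'I_n}) : #|S| = k -> gamma k F <= #|avoid F S|.
Proof.
move=> HS; rewrite /gamma; apply: bigmin_seq_le; first by rewrite mem_index_enum.
by rewrite HS.
Qed.

Theorem fact4p6 (n l : nat) (F : {set {set 'I_n}}) (x : 'I_n) :
  2 <= l ->
  (forall A, A \in F -> #|A| = l) ->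
  intersecting F ->
  (exists2 A, A \in F & x \in A) ->
  (gamma (l.-1) F).+1 <= #|link F x| /\
  (#|link F x| = (gamma (l.-1) F).+1 ->
     (forall A, A \in link F x -> #|A| = l.-1) /\
     (forall A B, A \in link F x -> B \in link F x -> A != B ->
        [disjoint A & B])).
Proof.
move=> l2 Hsz Hint [A0 A0F xA0].
have linkP : forall A, A \in link F x -> exists2 B, B \in F & x \in B /\ A = B :\ x.
  move=> A /imsetP [B]; rewrite inE => /andP [BF xB] ->; by exists B.
have linkI : forall B, B \in F -> x \in B -> B :\ x \in link F x.
  by move=> B BF xB; apply/imsetP; exists B => //; rewrite inE BF.
have szL : forall A, A \in link F x -> #|A| = l.-1.
  move=> A /linkP [B BF [xB ->]].
  by move: (Hsz B BF); rewrite (cardsD1 x B) xB add1n => <-.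
have key : forall A, A \in link F x ->
   [/\ #|(fun C => C :\ x) @: avoid F A| = #|avoid F A|,
       (fun C => C :\ x) @: avoid F A \subset link F x :\ A &
       #|link F x :\ A| = #|link F x| - 1].
  move=> A AL.
  have Hav : forall C, C \in avoid F A -> [/\ C \in F, x \in C & [disjoint C & A]].
    move=> C; rewrite inE => /andP [CF dCA]; split => //.
    case: (linkP A AL) => B BF [xB eA].
    have /forallP /(_ B) := Hint; rewrite BF /= => /forallP /(_ C); rewrite CF /=.
    case/set0Pn => y; rewrite inE => /andP [yB yC].
    case: (eqVneq y x) => [<- //|yx].
    have yA : y \in A by rewrite eA in_setD1 yx yB.
    by move: dCA; rewrite disjoint_sym => /disjointFr /(_ yA); rewrite yC.
  split.
  - apply: card_in_imset => C1 C2 /Hav [_ x1 _] /Hav [_ x2 _] E.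
    by rewrite -(setD1K x1) -(setD1K x2) E.
  - apply/subsetP => D /imsetP [C /Hav [CF xC dCA] ->].
    rewrite !inE linkI // andbT.
    apply/negP => /eqP E.
    have : 0 < #|A| by rewrite (szL A AL); move: l2; case: (l) => [|[|]].
    case/card_gt0P => y yA.
    move: dCA => /disjointFl /(_ yA).
    by rewrite -E inE in yA; case/andP: yA => _ ->.
  - by rewrite (cardsD1 A (link F x)) AL add1n subSS subn0.
have A0L := linkI A0 A0F xA0.
have lpos : 0 < #|link F x| by apply/card_gt0P; exists (A0 :\ x).
have bnd : forall A, A \in link F x -> gamma l.-1 F <= #|avoid F A| <= #|link F x| - 1.
  move=> A AL; case: (key A AL) => E1 Hs E2.
  by rewrite gamma_le ?szL //= -E1 -E2 subset_leq_card.
split.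
  case/andP: (bnd _ A0L) => h1 h2.
  by rewrite -(subnK lpos) addn1 ltnS (leq_trans h1 h2).
move=> Heq; split => // A B AL BL AB.
case: (key A AL) => E1 Hs E2.
case/andP: (bnd _ AL) => h1 h2.
have : (fun C => C :\ x) @: avoid F A == link F x :\ A.
  rewrite eqEcard Hs /= E1 E2 Heq subn1 /=; exact: h1.
move/eqP => Eq.
have : B \in link F x :\ A by rewrite !inE eq_sym AB BL.
rewrite -Eq => /imsetP [C]; rewrite inE => /andP [_ dCA] ->.
rewrite disjoint_sym; exact: (disjointWl (subsetDl C [set x]) dCA).
Qed.
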